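(* A term $t$ of the silly substitution calculus is weakly $\to_w$-normalizing if and only if it is strongly $\to_w$-normalizing.
   Context: Terms: $t ::= x \mid \lambda x.t \mid t\,u \mid t[x\backslash u]$ ($t[x\backslash u]$ an explicit substitution binding $x$ in $t$; terms up to $\alpha$). Values $v ::= \lambda x.t$. Substitution contexts $S ::= \langle\cdot\rangle\mid S[x\backslash u]$. Weak contexts $W ::= \langle\cdot\rangle \mid W\,t \mid t\,W \mid t[x\backslash W] \mid W[x\backslash u]$; $W\langle\langle t\rangle\rangle$ is plugging without capture of free variables of $t$. Root rules: $S\langle\lambda x.t\rangle u\mapsto_m S\langle t[x\backslash u]\rangle$; $W\langle\langle x\rangle\rangle[x\backslash u]\mapsto_e W\langle\langle u\rangle\rangle[x\backslash u]$; $t[x\backslash S\langle v\rangle]\mapsto_{gcv} S\langle t\rangle$ if $x\notin\mathrm{fv}(t)$. $\to_w$ is the union of their closures under weak contexts. Weakly normalizing: some reduction sequence reaches a normal form; strongly normalizing: no infinite reduction sequence. *)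

(* Defs.v *)
(* Silly substitution calculus, weak reduction ->_w.
   Terms up to alpha-equivalence are represented with de Bruijn indices. *)
From Stdlib Require Import Arith Relations.

(* t ::= x | \x.t | t u | t[x\u]   ;  in [ES t u] index 0 of [t] is bound
   (the explicit substitution [t[x\u]]), [u] is outside the binder. *)
Inductive term : Type :=
| Var : nat -> term
| Lam : term -> term
| App : term -> term -> term
| ES  : term -> term -> term.

Fixpoint lift (k c : nat) (t : term) : term :=
  match t with
  | Var n => if c <=? n then Var (n + k) else Var n
  | Lam t => Lam (lift k (S c) t)
  | App t u => App (lift k c t) (lift k c u)
  | ES t u => ES (lift k (S c) t) (lift k c u)
  end.

(* decrement the indices > c (used when index c does not occur) *)
Fixpoint lower (c : nat) (t : term) : term :=
  match t with
  | Var n => if c <? n then Var (n - 1) else Var n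
  | Lam t => Lam (lower (S c) t)
  | App t u => App (lower c t) (lower c u)
  | ES t u => ES (lower (S c) t) (lower c u)
  end.

Fixpoint occurs (n : nat) (t : term) : bool :=
  match t with
  | Var m => Nat.eqb n m
  | Lam t => occurs (S n) t
  | App t u => occurs n t || occurs n u
  | ES t u => occurs (S n) t || occurs n u
  end.

Definition is_value (t : term) : Prop := exists b, t = Lam b.

Inductive sctx : Type :=
| SHole : sctx
| SES : sctx -> term -> sctx.

Fixpoint plugS (s : sctx) (t : term) : term :=
  match s with
  | SHole => t
  | SES s u => ES (plugS s t) u
  end.

Fixpoint depthS (s : sctx) : nat :=
  match s with
  | SHole => 0
  | SES s _ => S (depthS s)
  end.

Inductive wctx : Type :=
| WHole : wctx
| WAppL : wctx -> term -> wctx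
| WAppR : term -> wctx -> wctx
| WESR  : term -> wctx -> wctx
| WESL  : wctx -> term -> wctx.

Fixpoint plugW (w : wctx) (t : term) : term :=
  match w with
  | WHole => t
  | WAppL w u => App (plugW w t) u
  | WAppR u w => App u (plugW w t)
  | WESR u w => ES u (plugW w t)
  | WESL w u => ES (plugW w t) u
  end.

Fixpoint depthW (w : wctx) : nat :=
  match w with
  | WHole => 0
  | WAppL w _ => depthW w
  | WAppR _ w => depthW w
  | WESR _ w => depthW w
  | WESL w _ => S (depthW w)
  end.

(* Root rules.  Capture-free plugging W<<t>> is rendered by lifting t over
   the depthW W binders of W. *)
Inductive root : term -> term -> Prop :=
| root_m : forall (s : sctx) (t u : term),
    (* S<\x.t> u  |->  S<t[x\u]> *)
    root (App (plugS s (Lam t)) u) (plugS s (ES t (lift (depthS s) 0 u)))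
| root_e : forall (w : wctx) (u : term),
    (* W<<x>>[x\u]  |->  W<<u>>[x\u] *)
    root (ES (plugW w (Var (depthW w))) u)
         (ES (plugW w (lift (S (depthW w)) 0 u)) u)
| root_gcv : forall (t : term) (s : sctx) (v : term),
    (* t[x\S<v>]  |->  S<t>   if x not free in t *)
    is_value v -> occurs 0 t = false ->
    root (ES t (plugS s v)) (plugS s (lift (depthS s) 0 (lower 0 t))).

Definition wstep (t t' : term) : Prop :=
  exists (w : wctx) (r r' : term), root r r' /\ t = plugW w r /\ t' = plugW w r'.

Definition wnormal (t : term) : Prop := ~ exists t', wstep t t'.

Definition weakly_normalizing (t : term) : Prop :=
  exists t', clos_refl_trans term wstep t t' /\ wnormal t'.

Definition strongly_normalizing (t : term) : Prop :=
  Acc (fun a b => wstep b a) t.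

(* Main.v *)
Require Import Defs.
From Stdlib Require Import Arith Lia Relations List Classical.

Ltac leb_cases :=
  repeat match goal with
  | |- context [?a <=? ?b] => destruct (Nat.leb_spec a b)
  | |- context [?a <? ?b] => destruct (Nat.ltb_spec a b)
  | H : context [?a <=? ?b] |- _ => destruct (Nat.leb_spec a b)
  | H : context [?a <? ?b] |- _ => destruct (Nat.ltb_spec a b)
  end.

Lemma lift_0 : forall t c, lift 0 c t = t.
Proof. induction t; intros; simpl; leb_cases; f_equal; auto; lia. Qed.

Lemma lift_lift : forall t a b c c', c <= c' <= c + b ->
  lift a c' (lift b c t) = lift (a + b) c t.
Proof.
  induction t; intros; simpl.
  - leb_cases; simpl; leb_cases; f_equal; lia.
  - f_equal; apply IHt; lia.
  - f_equal; auto.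
  - f_equal; [apply IHt1|apply IHt2]; lia.
Qed.

Lemma lift_perm : forall t a b c c', c' <= c ->
  lift a c' (lift b c t) = lift b (c + a) (lift a c' t).
Proof.
  induction t; intros; simpl.
  - leb_cases; simpl; leb_cases; f_equal; lia.
  - f_equal. replace (S (c + a)) with (S c + a) by lia. apply IHt; lia.
  - f_equal; auto.
  - f_equal; [replace (S (c + a)) with (S c + a) by lia; apply IHt1|apply IHt2]; lia.
Qed.

Lemma lift_1_0_lift : forall t k c, lift 1 0 (lift k c t) = lift k (S c) (lift 1 0 t).
Proof. intros. rewrite lift_perm by lia. f_equal; lia. Qed.

Lemma lift_S_0 : forall t d, lift d 0 (lift 1 0 t) = lift (S d) 0 t.
Proof. intros. rewrite lift_lift by lia. f_equal; lia. Qed.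

Lemma lower_lift : forall t c, lower c (lift 1 c t) = t.
Proof. induction t; intros; simpl; leb_cases; simpl; leb_cases; f_equal; auto; lia. Qed.

Lemma occurs_lift : forall t c, occurs c (lift 1 c t) = false.
Proof.
  induction t; intros; simpl; leb_cases; simpl; try rewrite IHt; try rewrite IHt1; try rewrite IHt2;
  auto; apply Nat.eqb_neq; lia.
Qed.

Lemma lift_lower : forall t c, occurs c t = false -> lift 1 c (lower c t) = t.
Proof.
  induction t; intros; simpl in *.
  - apply Nat.eqb_neq in H. leb_cases; simpl; leb_cases; f_equal; lia.
  - f_equal; auto.
  - apply Bool.orb_false_iff in H as [? ?]. f_equal; auto.
  - apply Bool.orb_false_iff in H as [? ?]. f_equal; auto.
Qed.

Lemma lift_inj : forall t t' k c, lift k c t = lift k c t' -> t = t'.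
Proof.
  induction t; destruct t'; intros; simpl in *; leb_cases; try discriminate;
  try (injection H; intros; subst; f_equal; eauto; lia).
Qed.

Lemma lift_inv_Var : forall t k c n, lift k c t = Var n ->
  exists m, t = Var m /\ n = (if c <=? m then m + k else m).
Proof. destruct t; simpl; intros; leb_cases; try discriminate; injection H; intros; subst;
  eexists; split; eauto; leb_cases; lia. Qed.
Lemma lift_inv_Lam : forall t k c b, lift k c t = Lam b -> exists b0, t = Lam b0 /\ b = lift k (S c) b0.
Proof. destruct t; simpl; intros; leb_cases; try discriminate; injection H; intros; subst; eauto. Qed.
Lemma lift_inv_App : forall t k c a b, lift k c t = App a b ->
  exists a0 b0, t = App a0 b0 /\ a = lift k c a0 /\ b = lift k c b0.
Proof. destruct t; simpl; intros; leb_cases; try discriminate; injection H; intros; subst; eauto. Qed.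
Lemma lift_inv_ES : forall t k c a b, lift k c t = ES a b ->
  exists a0 b0, t = ES a0 b0 /\ a = lift k (S c) a0 /\ b = lift k c b0.
Proof. destruct t; simpl; intros; leb_cases; try discriminate; injection H; intros; subst; eauto. Qed.

Lemma lift_lift_inv : forall Y t0 k j c, lift 1 j t0 = lift k (S (j + c)) Y ->
  exists y0, Y = lift 1 j y0 /\ t0 = lift k (j + c) y0.
Proof.
  induction Y; intros t0 k j c H; cbn [lift] in H.
  - destruct t0; cbn [lift] in H; leb_cases; try discriminate; injection H; intros; subst;
    first [ lia
          | exists (Var n0); cbn [lift]; split; leb_cases; f_equal; lia
          | exists (Var (n - 1)); cbn [lift]; split; leb_cases; f_equal; lia
          | exists (Var n); cbn [lift]; split; leb_cases; f_equal; lia ].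
  - destruct t0; simpl in H; leb_cases; try discriminate. injection H; intros; subst.
    destruct (IHY t0 k (S j) c) as [y0 [? ?]]; [simpl; auto|]. subst.
    exists (Lam y0); simpl; auto.
  - destruct t0; simpl in H; leb_cases; try discriminate. injection H; intros; subst.
    destruct (IHY1 t0_1 k j c) as [y1 [? ?]]; auto.
    destruct (IHY2 t0_2 k j c) as [y2 [? ?]]; auto. subst.
    exists (App y1 y2); simpl; auto.
  - destruct t0; simpl in H; leb_cases; try discriminate. injection H; intros; subst.
    destruct (IHY1 t0_1 k (S j) c) as [y1 [? ?]]; auto.
    destruct (IHY2 t0_2 k j c) as [y2 [? ?]]; auto. subst.
    exists (ES y1 y2); simpl; auto.
Qed.

Fixpoint isSL (X : term) : Prop :=
  match X with Lam _ => True | ES Y _ => isSL Y | _ => False end.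

Fixpoint mres (X u : term) : term :=
  match X with
  | Lam b => ES b u
  | ES Y w => ES (mres Y (lift 1 0 u)) w
  | _ => App X u
  end.

Fixpoint gres (t0 X : term) : term :=
  match X with
  | Lam _ => t0
  | ES Y w => ES (gres (lift 1 0 t0) Y) w
  | _ => ES (lift 1 0 t0) X
  end.

Lemma isSL_lift : forall X k c, isSL X -> isSL (lift k c X).
Proof. induction X; simpl; intros; leb_cases; auto. Qed.
Lemma isSL_lift_inv : forall X k c, isSL (lift k c X) -> isSL X.
Proof. induction X; simpl; intros; leb_cases; simpl in *; eauto. Qed.

Lemma mres_lift : forall X u k c, lift k c (mres X u) = mres (lift k c X) (lift k c u).
Proof.
  induction X; intros; simpl; leb_cases; simpl; auto.
  f_equal. rewrite IHX1. f_equal. symmetry; apply lift_1_0_lift.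
Qed.

Lemma gres_lift : forall X t0 k c, lift k c (gres t0 X) = gres (lift k c t0) (lift k c X).
Proof.
  induction X; intros; simpl; leb_cases; simpl; auto; try (f_equal; symmetry; apply lift_1_0_lift).
  f_equal. rewrite IHX1. f_equal. symmetry; apply lift_1_0_lift.
Qed.

Lemma mres_gres : forall Z a u, mres (gres a Z) u = gres (mres a u) Z.
Proof.
  induction Z; intros; simpl; auto.
  - rewrite mres_lift. auto.
  - rewrite mres_lift. auto.
  - f_equal. rewrite IHZ1. rewrite mres_lift. auto.
Qed.

Lemma gres_assoc : forall W a x, gres (gres a x) W = gres a (gres x W).
Proof.
  induction W; intros; simpl; auto.
  - f_equal. rewrite gres_lift. auto.
  - f_equal. rewrite gres_lift. auto.
  - f_equal. rewrite gres_lift. rewrite IHW1. auto.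
Qed.

Lemma isSL_gres : forall Z a, isSL a -> isSL (gres a Z).
Proof. induction Z; simpl; intros; auto using isSL_lift. Qed.

Inductive sub1 : nat -> term -> term -> term -> Prop :=
| s1_var : forall k u, sub1 k u (Var k) (lift (S k) 0 u)
| s1_appL : forall k u a a' b, sub1 k u a a' -> sub1 k u (App a b) (App a' b)
| s1_appR : forall k u a b b', sub1 k u b b' -> sub1 k u (App a b) (App a b')
| s1_esL : forall k u a a' b, sub1 (S k) u a a' -> sub1 k u (ES a b) (ES a' b)
| s1_esR : forall k u a b b', sub1 k u b b' -> sub1 k u (ES a b) (ES a b').

Inductive istep : term -> term -> Prop :=
| st_m : forall X u, isSL X -> istep (App X u) (mres X u)
| st_g : forall t0 X, isSL X -> istep (ES (lift 1 0 t0) X) (gres t0 X)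
| st_e : forall B B' u, sub1 0 u B B' -> istep (ES B u) (ES B' u)
| st_appL : forall a a' b, istep a a' -> istep (App a b) (App a' b)
| st_appR : forall a b b', istep b b' -> istep (App a b) (App a b')
| st_esL : forall a a' b, istep a a' -> istep (ES a b) (ES a' b)
| st_esR : forall a b b', istep b b' -> istep (ES a b) (ES a b').

Lemma mres_plugS : forall s t u, mres (plugS s (Lam t)) u = plugS s (ES t (lift (depthS s) 0 u)).
Proof.
  induction s; intros; simpl.
  - rewrite lift_0. auto.
  - f_equal. rewrite IHs. rewrite lift_S_0. auto.
Qed.
Lemma isSL_plugS : forall s t, isSL (plugS s (Lam t)).
Proof. induction s; simpl; auto. Qed.
Lemma isSL_plugS_inv : forall X, isSL X -> exists s t, X = plugS s (Lam t).
Proof.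
  induction X; simpl; intros; try contradiction.
  - exists SHole, X; auto.
  - destruct (IHX1 H) as [s [t ?]]. subst. exists (SES s X2), t. auto.
Qed.
Lemma gres_plugS : forall s t0 b, gres t0 (plugS s (Lam b)) = plugS s (lift (depthS s) 0 t0).
Proof.
  induction s; intros; simpl.
  - rewrite lift_0. auto.
  - f_equal. rewrite IHs. rewrite lift_S_0. auto.
Qed.
Lemma sub1_plugW : forall w k u, sub1 k u (plugW w (Var (k + depthW w))) (plugW w (lift (S (k + depthW w)) 0 u)).
Proof.
  induction w; intros; simpl.
  - rewrite Nat.add_0_r. constructor.
  - constructor. auto.
  - constructor. auto.
  - constructor. auto.
  - constructor. replace (k + S (depthW w)) with (S k + depthW w) by lia. auto.
Qed.
Lemma sub1_plugW_inv : forall k u B B', sub1 k u B B' ->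
  exists w, B = plugW w (Var (k + depthW w)) /\ B' = plugW w (lift (S (k + depthW w)) 0 u).
Proof.
  induction 1.
  - exists WHole. simpl. rewrite Nat.add_0_r. auto.
  - destruct IHsub1 as [w [? ?]]; subst. exists (WAppL w b); auto.
  - destruct IHsub1 as [w [? ?]]; subst. exists (WAppR a w); auto.
  - destruct IHsub1 as [w [? ?]]; subst. exists (WESL w b); simpl.
    replace (k + S (depthW w)) with (S k + depthW w) by lia. auto.
  - destruct IHsub1 as [w [? ?]]; subst. exists (WESR a w); auto.
Qed.

Lemma root_istep : forall r r', root r r' -> istep r r'.
Proof.
  intros r r' H; destruct H.
  - rewrite <- mres_plugS. constructor. apply isSL_plugS.
  - constructor. apply (sub1_plugW w 0 u).
  - rename H into Hv, H0 into Ho. destruct Hv as [b ?]; subst.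
    rewrite <- (lift_lower t 0 Ho) at 1.
    rewrite <- (gres_plugS s _ b). constructor. apply isSL_plugS.
Qed.

Lemma wstep_istep : forall t t', wstep t t' -> istep t t'.
Proof.
  intros t t' [w [r [r' [H [? ?]]]]]; subst.
  induction w; simpl.
  - auto using root_istep.
  - apply st_appL; auto.
  - apply st_appR; auto.
  - apply st_esR; auto.
  - apply st_esL; auto.
Qed.

Lemma wstep_ctx : forall w t t', wstep t t' -> wstep (plugW w t) (plugW w t').
Proof.
  intros w t t' [w' [r [r' [H [? ?]]]]]; subst.
  assert (forall w1 w2 x, plugW w1 (plugW w2 x) = plugW (
    (fix comp (w1 : wctx) : wctx := match w1 with
      | WHole => w2 | WAppL w u => WAppL (comp w) u | WAppR u w => WAppR u (comp w)
      | WESR u w => WESR u (comp w) | WESL w u => WESL (comp w) u end) w1) x) as Hc.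
  { induction w1; intros; simpl; f_equal; auto. }
  do 3 eexists. split; [eauto|]. split; apply Hc.
Qed.

Lemma istep_wstep : forall t t', istep t t' -> wstep t t'.
Proof.
  induction 1.
  - destruct (isSL_plugS_inv X H) as [s [b ?]]; subst.
    exists WHole. do 2 eexists. split; [|simpl; split; reflexivity].
    rewrite mres_plugS. constructor.
  - destruct (isSL_plugS_inv X H) as [s [b ?]]; subst.
    exists WHole. do 2 eexists. split; [|simpl; split; reflexivity].
    rewrite gres_plugS.
    replace (lift (depthS s) 0 t0) with (lift (depthS s) 0 (lower 0 (lift 1 0 t0))) by (rewrite lower_lift; auto).
    constructor. exists b; auto. apply occurs_lift.
  - destruct (sub1_plugW_inv _ _ _ _ H) as [w [? ?]]; subst.
    exists WHole. do 2 eexists. split; [|simpl; split; reflexivity]. constructor.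
  - apply (wstep_ctx (WAppL WHole b)) in IHistep; auto.
  - apply (wstep_ctx (WAppR a WHole)) in IHistep; auto.
  - apply (wstep_ctx (WESL WHole b)) in IHistep; auto.
  - apply (wstep_ctx (WESR a WHole)) in IHistep; auto.
Qed.

Lemma sub1_lift : forall j u B B', sub1 j u B B' -> forall k c,
  sub1 j (lift k c u) (lift k (S (j + c)) B) (lift k (S (j + c)) B').
Proof.
  induction 1; intros; cbn [lift].
  - leb_cases; [lia|].
    replace (lift k0 (S (k + c)) (lift (S k) 0 u)) with (lift (S k) 0 (lift k0 c u))
      by (rewrite lift_perm by lia; f_equal; lia). constructor.
  - constructor; auto.
  - constructor; auto.
  - constructor. specialize (IHsub1 k0 c). simpl in IHsub1. auto.
  - constructor; auto.
Qed.

Lemma istep_lift : forall t t', istep t t' -> forall k c, istep (lift k c t) (lift k c t').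
Proof.
  induction 1; intros; simpl.
  - rewrite mres_lift. constructor. apply isSL_lift; auto.
  - rewrite gres_lift. rewrite <- lift_1_0_lift. constructor. apply isSL_lift; auto.
  - constructor. apply (sub1_lift 0 u B B' H k c).
  - apply st_appL; auto.
  - apply st_appR; auto.
  - apply st_esL; auto.
  - apply st_esR; auto.
Qed.

Lemma sub1_antilift : forall j u B B', sub1 j u B B' -> forall k c B0 u0,
  B = lift k (S (j + c)) B0 -> u = lift k c u0 ->
  exists B0', sub1 j u0 B0 B0' /\ B' = lift k (S (j + c)) B0'.
Proof.
  induction 1; intros kk cc B0 u0 HB Hu; subst.
  - symmetry in HB. apply lift_inv_Var in HB as [m [? ?]]; subst. leb_cases; [lia|]. subst.
    eexists; split; [constructor|]. rewrite lift_perm by lia. f_equal; lia.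
  - symmetry in HB. apply lift_inv_App in HB as [a0 [b0 [? [? ?]]]]; subst.
    destruct (IHsub1 kk cc a0 u0) as [a1 [? ?]]; auto. subst. eexists; split; [eapply s1_appL; eauto|]; auto.
  - symmetry in HB. apply lift_inv_App in HB as [a0 [b0 [? [? ?]]]]; subst.
    destruct (IHsub1 kk cc b0 u0) as [a1 [? ?]]; auto. subst. eexists; split; [eapply s1_appR; eauto|]; auto.
  - symmetry in HB. apply lift_inv_ES in HB as [a0 [b0 [? [? ?]]]]; subst.
    destruct (IHsub1 kk cc a0 u0) as [a1 [? ?]]; auto. subst. eexists; split; [eapply s1_esL; eauto|]; auto.
  - symmetry in HB. apply lift_inv_ES in HB as [a0 [b0 [? [? ?]]]]; subst.
    destruct (IHsub1 kk cc b0 u0) as [a1 [? ?]]; auto. subst. eexists; split; [eapply s1_esR; eauto|]; auto.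
Qed.

Lemma istep_antilift : forall t t1, istep t t1 -> forall k c t0, t = lift k c t0 ->
  exists t1', t1 = lift k c t1' /\ istep t0 t1'.
Proof.
  induction 1; intros k c tt Ht; symmetry in Ht.
  - apply lift_inv_App in Ht as [a0 [b0 [? [? ?]]]]; subst.
    exists (mres a0 b0). rewrite mres_lift. split; auto. constructor. eapply isSL_lift_inv; eauto.
  - apply lift_inv_ES in Ht as [a0 [b0 [? [? ?]]]]; subst.
    destruct (lift_lift_inv a0 t0 k 0 c) as [y0 [? ?]]; auto. subst.
    exists (gres y0 b0). rewrite gres_lift. split; auto. constructor. eapply isSL_lift_inv; eauto.
  - apply lift_inv_ES in Ht as [a0 [b0 [? [? ?]]]]; subst.
    destruct (sub1_antilift 0 _ _ _ H k c a0 b0) as [a1 [? ?]]; auto. subst.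
    exists (ES a1 b0). split; auto. apply st_e; auto.
  - apply lift_inv_App in Ht as [a0 [b0 [? [? ?]]]]; subst.
    destruct (IHistep k c a0) as [a1 [? ?]]; auto. subst. exists (App a1 b0); split; auto. apply st_appL; auto.
  - apply lift_inv_App in Ht as [a0 [b0 [? [? ?]]]]; subst.
    destruct (IHistep k c b0) as [a1 [? ?]]; auto. subst. exists (App a0 a1); split; auto. apply st_appR; auto.
  - apply lift_inv_ES in Ht as [a0 [b0 [? [? ?]]]]; subst.
    destruct (IHistep k (S c) a0) as [a1 [? ?]]; auto. subst. exists (ES a1 b0); split; auto. apply st_esL; auto.
  - apply lift_inv_ES in Ht as [a0 [b0 [? [? ?]]]]; subst.
    destruct (IHistep k c b0) as [a1 [? ?]]; auto. subst. exists (ES a0 a1); split; auto. apply st_esR; auto.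
Qed.

Lemma sub1_lift_none : forall j u t B', sub1 j u (lift 1 j t) B' -> False.
Proof.
  intros j u t B' H. remember (lift 1 j t) as T. revert t HeqT.
  induction H; intros t0 HT; symmetry in HT.
  - apply lift_inv_Var in HT as [m [? ?]]; leb_cases; lia.
  - apply lift_inv_App in HT as [a0 [b0 [? [? ?]]]]; eauto.
  - apply lift_inv_App in HT as [a0 [b0 [? [? ?]]]]; eauto.
  - apply lift_inv_ES in HT as [a0 [b0 [? [? ?]]]]; eauto.
  - apply lift_inv_ES in HT as [a0 [b0 [? [? ?]]]]; eauto.
Qed.

Lemma sub1_antilift2 : forall j z T B', sub1 j z T B' -> forall j' c t, j = S j' -> c <= j' -> T = lift 1 c t ->
  exists t', sub1 j' z t t' /\ B' = lift 1 c t'.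
Proof.
  induction 1; intros j' cc tt Hj Hc HT; subst; symmetry in HT.
  - apply lift_inv_Var in HT as [m [? ?]]; subst. leb_cases; [|lia].
    assert (m = j') by lia. subst. eexists; split; [constructor|].
    rewrite lift_lift by lia. f_equal; lia.
  - apply lift_inv_App in HT as [a0 [b0 [? [? ?]]]]; subst.
    destruct (IHsub1 j' cc a0) as [a1 [? ?]]; auto. subst. eexists; split; [eapply s1_appL; eauto|]; auto.
  - apply lift_inv_App in HT as [a0 [b0 [? [? ?]]]]; subst.
    destruct (IHsub1 j' cc b0) as [a1 [? ?]]; auto. subst. eexists; split; [eapply s1_appR; eauto|]; auto.
  - apply lift_inv_ES in HT as [a0 [b0 [? [? ?]]]]; subst.
    destruct (IHsub1 (S j') (S cc) a0) as [a1 [? ?]]; auto; try lia. subst. eexists; split; [eapply s1_esL; eauto|]; auto.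
  - apply lift_inv_ES in HT as [a0 [b0 [? [? ?]]]]; subst.
    destruct (IHsub1 j' cc b0) as [a1 [? ?]]; auto. subst. eexists; split; [eapply s1_esR; eauto|]; auto.
Qed.

Lemma istep_Var : forall n t, istep (Var n) t -> False.
Proof. intros n t H; inversion H. Qed.
Lemma istep_Lam : forall b t, istep (Lam b) t -> False.
Proof. intros b t H; inversion H. Qed.

Definition star := clos_refl_trans_1n term istep.
Definition tplus t t' := exists t1, istep t t1 /\ star t1 t'.

Lemma star_trans : forall a b c, star a b -> star b c -> star a c.
Proof. intros a b c H; induction H; intros; auto. econstructor; eauto. apply IHclos_refl_trans_1n; auto. Qed.
Lemma plus_star : forall a b, tplus a b -> star a b.
Proof. intros a b [x [? ?]]. econstructor; eauto. Qed.
Lemma plus_star_trans : forall a b c, tplus a b -> star b c -> tplus a c.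
Proof. intros a b c [x [? ?]] ?. exists x; split; auto. eapply star_trans; eauto. Qed.
Lemma star_plus_trans : forall a b c, star a b -> tplus b c -> tplus a c.
Proof. intros a b c H; induction H; intros; auto. exists y; split; auto. apply star_trans with z; auto. apply plus_star; auto. Qed.
Lemma step_plus : forall a b, istep a b -> tplus a b.
Proof. intros. exists b; split; auto. constructor. Qed.

Lemma star_map : forall (P : term -> Prop) (f : term -> term),
  (forall x y, P x -> istep x y -> istep (f x) (f y) /\ P y) ->
  forall x y, P x -> star x y -> star (f x) (f y).
Proof.
  intros P f Hf x y Hx H. revert Hx. induction H; intros Hx. constructor.
  destruct (Hf x y Hx H). apply Relation_Operators.rt1n_trans with (f y); auto. apply IHclos_refl_trans_1n; auto.
Qed.
Lemma plus_map : forall (P : term -> Prop) (f : term -> term),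
  (forall x y, P x -> istep x y -> istep (f x) (f y) /\ P y) ->
  forall x y, P x -> tplus x y -> tplus (f x) (f y).
Proof.
  intros P f Hf x y Hx [z [H1 H2]]. destruct (Hf x z Hx H1).
  exists (f z); split; auto. eapply star_map; eauto.
Qed.

Ltac map_tac f := first [ apply (plus_map (fun _ => True) f) | apply (star_map (fun _ => True) f) ];
  [ intros ? ? _ ?; split; [constructor; auto | exact I] | exact I | auto].

Inductive subm : nat -> term -> nat -> term -> term -> Prop :=
| sm_varK : forall k z n, subm k z 0 (Var n) (Var n)
| sm_var : forall k z, subm k z 1 (Var k) (lift (S k) 0 z)
| sm_lam : forall k z b, subm k z 0 (Lam b) (Lam b)
| sm_app : forall k z n1 n2 a a' b b', subm k z n1 a a' -> subm k z n2 b b' ->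
    subm k z (n1 + n2) (App a b) (App a' b')
| sm_es : forall k z n1 n2 a a' b b', subm (S k) z n1 a a' -> subm k z n2 b b' ->
    subm k z (n1 + n2) (ES a b) (ES a' b').

Lemma subm_refl : forall t k z, subm k z 0 t t.
Proof.
  induction t; intros; try constructor.
  - apply (sm_app k z 0 0); auto.
  - apply (sm_es k z 0 0); auto.
Qed.

Lemma subm_eqn : forall k z n m a b, subm k z n a b -> n = m -> subm k z m a b.
Proof. intros; subst; auto. Qed.

Lemma subm_zero : forall k z n a b, subm k z n a b -> n = 0 -> a = b.
Proof. induction 1; intros; auto; try lia; f_equal; auto; try (apply IHsubm1; lia); apply IHsubm2; lia. Qed.

Lemma sub1_subm : forall k z a b, sub1 k z a b -> subm k z 1 a b.
Proof.
  induction 1.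
  - constructor.
  - apply (sm_app k u 1 0); auto using subm_refl.
  - apply (sm_app k u 0 1); auto using subm_refl.
  - apply (sm_es k u 1 0); auto using subm_refl.
  - apply (sm_es k u 0 1); auto using subm_refl.
Qed.

Lemma subm_peel : forall k z c a b, subm k z c a b -> 0 < c ->
  exists a1, sub1 k z a a1 /\ subm k z (c - 1) a1 b.
Proof.
  induction 1; intros Hc; try lia.
  - exists (lift (S k) 0 z). split. constructor. apply subm_refl.
  - destruct n1.
    + destruct (IHsubm2 ltac:(lia)) as [b1 [? ?]]. exists (App a b1). split. apply s1_appR; auto.
      apply subm_zero in H; auto; subst. apply (subm_eqn k z (0 + (n2 - 1))); [constructor; auto; apply subm_refl| lia].
    + destruct (IHsubm1 ltac:(lia)) as [a1 [? ?]]. exists (App a1 b). split. apply s1_appL; auto.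
      apply (subm_eqn k z ((S n1 - 1) + n2)); [constructor; auto| lia].
  - destruct n1.
    + destruct (IHsubm2 ltac:(lia)) as [b1 [? ?]]. exists (ES a b1). split. apply s1_esR; auto.
      apply subm_zero in H; auto; subst. apply (subm_eqn k z (0 + (n2 - 1))); [constructor; auto; apply subm_refl| lia].
    + destruct (IHsubm1 ltac:(lia)) as [a1 [? ?]]. exists (ES a1 b). split. apply s1_esL; auto.
      apply (subm_eqn k z ((S n1 - 1) + n2)); [constructor; auto| lia].
Qed.

Lemma subm_sub1 : forall k z a b, subm k z 1 a b -> sub1 k z a b.
Proof.
  intros. destruct (subm_peel _ _ _ _ _ H) as [a1 [? ?]]; auto.
  apply subm_zero in H1; auto; subst; auto.
Qed.

Lemma subm_seq : forall c z Y Y', subm 0 z c Y Y' -> 0 < c -> tplus (ES Y z) (ES Y' z).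
Proof.
  induction c; intros; [lia|].
  destruct (subm_peel _ _ _ _ _ H) as [Y1 [? ?]]; auto.
  replace (S c - 1) with c in H2 by lia.
  destruct c.
  - apply subm_zero in H2; auto; subst. apply step_plus. apply st_e; auto.
  - exists (ES Y1 z). split. apply st_e; auto. apply plus_star. apply IHc; auto. lia.
Qed.

Lemma subm_lift : forall j z c Y Y', subm j z c Y Y' -> forall k c0, c0 <= j ->
  subm (j + k) z c (lift k c0 Y) (lift k c0 Y').
Proof.
  induction 1; intros kk c0 Hc; cbn [lift].
  - leb_cases; constructor.
  - leb_cases; [|lia]. rewrite lift_lift by lia. replace (kk + S k) with (S (k + kk)) by lia. constructor.
  - constructor.
  - constructor; auto.
  - constructor; auto. apply (IHsubm1 kk (S c0)); lia.
Qed.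

Lemma subm_lift1 : forall k z c Y Y', subm k z c Y Y' -> subm (S k) z c (lift 1 0 Y) (lift 1 0 Y').
Proof. intros. replace (S k) with (k + 1) by lia. apply subm_lift; auto; lia. Qed.

Lemma subm_mres : forall Y k z c1 c2 Y' u u', isSL Y -> subm k z c1 Y Y' -> subm k z c2 u u' ->
  subm k z (c1 + c2) (mres Y u) (mres Y' u').
Proof.
  induction Y; intros k z c1 c2 Y' u u' HY H1 H2; simpl in HY; try contradiction; inversion H1; subst.
  - simpl. apply (sm_es k z 0 c2); auto using subm_refl.
  - simpl. apply (subm_eqn k z ((n1 + c2) + n2)); [|lia].
    constructor; auto. apply IHY1; auto. apply subm_lift1; auto.
Qed.

Lemma subm_gres : forall X k z c1 c2 X' t t', isSL X -> subm k z c1 t t' -> subm k z c2 X X' ->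
  subm k z (c1 + c2) (gres t X) (gres t' X').
Proof.
  induction X; intros k z c1 c2 X' t t' HX H1 H2; simpl in HX; try contradiction; inversion H2; subst.
  - simpl. rewrite Nat.add_0_r; auto.
  - simpl. apply (subm_eqn k z ((c1 + n1) + n2)); [|lia].
    constructor; auto. apply IHX1; auto. apply subm_lift1; auto.
Qed.

Lemma sub1_mres : forall Y k z Y1 u, isSL Y -> sub1 k z Y Y1 -> sub1 k z (mres Y u) (mres Y1 u).
Proof.
  intros. apply subm_sub1. apply (subm_eqn k z (1 + 0)); auto.
  apply subm_mres; auto using sub1_subm, subm_refl.
Qed.

Lemma sub1_gres : forall X k z X1 t, isSL X -> sub1 k z X X1 -> sub1 k z (gres t X) (gres t X1).
Proof.
  intros. apply subm_sub1. apply (subm_eqn k z (0 + 1)); auto.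
  apply subm_gres; auto using sub1_subm, subm_refl.
Qed.

Lemma sub1_isSL : forall k z Y Y1, sub1 k z Y Y1 -> isSL Y -> isSL Y1.
Proof. induction 1; simpl; intros; auto; contradiction. Qed.

Lemma isSL_step : forall Y Y1, istep Y Y1 -> isSL Y -> isSL Y1.
Proof.
  induction 1; simpl; intros; auto; try contradiction.
  - apply isSL_gres. eapply isSL_lift_inv; eauto.
  - eapply sub1_isSL; eauto.
Qed.

Lemma mres_step : forall Y Y1 u, istep Y Y1 -> isSL Y -> istep (mres Y u) (mres Y1 u).
Proof.
  intros Y Y1 u H; revert u; induction H; intros uu HY; simpl in *; try contradiction.
  - rewrite <- mres_lift. rewrite mres_gres. constructor; auto.
  - apply st_e. apply sub1_mres; auto.
  - apply st_esL; auto.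
  - apply st_esR; auto.
Qed.

Lemma mres_step_arg : forall Y u u1, isSL Y -> istep u u1 -> istep (mres Y u) (mres Y u1).
Proof.
  induction Y; intros; simpl in *; try contradiction.
  - apply st_esR; auto.
  - apply st_esL. apply IHY1; auto. apply istep_lift; auto.
Qed.

Lemma gres_step1 : forall X t t1, istep t t1 -> istep (gres t X) (gres t1 X).
Proof.
  induction X; intros; simpl; auto; try (apply st_esL; apply istep_lift; auto).
  apply st_esL. apply IHX1. apply istep_lift; auto.
Qed.

Lemma gres_step2 : forall X X1 t, istep X X1 -> isSL X -> istep (gres t X) (gres t X1).
Proof.
  intros X X1 t H; revert t; induction H; intros tt HX; simpl in *; try contradiction.
  - rewrite <- gres_lift. rewrite <- gres_assoc. constructor; auto.
  - apply st_e. apply sub1_gres; auto.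
  - apply st_esL; auto.
  - apply st_esR; auto.
Qed.

Lemma mres_plus : forall Y Y1 u, isSL Y -> tplus Y Y1 -> tplus (mres Y u) (mres Y1 u).
Proof.
  intros. apply (plus_map isSL (fun y => mres y u)); auto.
  intros. split. apply mres_step; auto. eapply isSL_step; eauto.
Qed.
Lemma mres_star : forall Y Y1 u, isSL Y -> star Y Y1 -> star (mres Y u) (mres Y1 u).
Proof.
  intros. apply (star_map isSL (fun y => mres y u)); auto.
  intros. split. apply mres_step; auto. eapply isSL_step; eauto.
Qed.
Lemma mres_plus_arg : forall Y u u1, isSL Y -> tplus u u1 -> tplus (mres Y u) (mres Y u1).
Proof. intros. apply (plus_map (fun _ => True) (mres Y)); auto. intros; split; auto. apply mres_step_arg; auto. Qed.
Lemma mres_star_arg : forall Y u u1, isSL Y -> star u u1 -> star (mres Y u) (mres Y u1).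
Proof. intros. apply (star_map (fun _ => True) (mres Y)); auto. intros; split; auto. apply mres_step_arg; auto. Qed.
Lemma gres_plus1 : forall X t t1, tplus t t1 -> tplus (gres t X) (gres t1 X).
Proof. intros. apply (plus_map (fun _ => True) (fun y => gres y X)); auto. intros; split; auto. apply gres_step1; auto. Qed.
Lemma gres_star1 : forall X t t1, star t t1 -> star (gres t X) (gres t1 X).
Proof. intros. apply (star_map (fun _ => True) (fun y => gres y X)); auto. intros; split; auto. apply gres_step1; auto. Qed.
Lemma gres_plus2 : forall X X1 t, isSL X -> tplus X X1 -> tplus (gres t X) (gres t X1).
Proof.
  intros. apply (plus_map isSL (gres t)); auto.
  intros. split. apply gres_step2; auto. eapply isSL_step; eauto.
Qed.
Lemma gres_star2 : forall X X1 t, isSL X -> star X X1 -> star (gres t X) (gres t X1).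
Proof.
  intros. apply (star_map isSL (gres t)); auto.
  intros. split. apply gres_step2; auto. eapply isSL_step; eauto.
Qed.

Lemma plus_appL : forall a a' b, tplus a a' -> tplus (App a b) (App a' b).
Proof. intros. apply (plus_map (fun _ => True) (fun y => App y b)); auto. intros; split; auto. apply st_appL; auto. Qed.
Lemma plus_appR : forall a b b', tplus b b' -> tplus (App a b) (App a b').
Proof. intros. apply (plus_map (fun _ => True) (fun y => App a y)); auto. intros; split; auto. apply st_appR; auto. Qed.
Lemma plus_esL : forall a a' b, tplus a a' -> tplus (ES a b) (ES a' b).
Proof. intros. apply (plus_map (fun _ => True) (fun y => ES y b)); auto. intros; split; auto. apply st_esL; auto. Qed.
Lemma plus_esR : forall a b b', tplus b b' -> tplus (ES a b) (ES a b').
Proof. intros. apply (plus_map (fun _ => True) (fun y => ES a y)); auto. intros; split; auto. apply st_esR; auto. Qed.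
Lemma star_appL : forall a a' b, star a a' -> star (App a b) (App a' b).
Proof. intros. apply (star_map (fun _ => True) (fun y => App y b)); auto. intros; split; auto. apply st_appL; auto. Qed.
Lemma star_appR : forall a b b', star b b' -> star (App a b) (App a b').
Proof. intros. apply (star_map (fun _ => True) (fun y => App a y)); auto. intros; split; auto. apply st_appR; auto. Qed.
Lemma star_esL : forall a a' b, star a a' -> star (ES a b) (ES a' b).
Proof. intros. apply (star_map (fun _ => True) (fun y => ES y b)); auto. intros; split; auto. apply st_esL; auto. Qed.
Lemma star_esR : forall a b b', star b b' -> star (ES a b) (ES a b').
Proof. intros. apply (star_map (fun _ => True) (fun y => ES a y)); auto. intros; split; auto. apply st_esR; auto. Qed.
Lemma star_lift : forall a b k c, star a b -> star (lift k c a) (lift k c b).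
Proof. intros. apply (star_map (fun _ => True) (lift k c)); auto. intros; split; auto. apply istep_lift; auto. Qed.

Inductive mterm : Type :=
| MVar : bool -> nat -> mterm
| MLam : term -> mterm
| MApp : bool -> mterm -> mterm -> mterm
| MES : mterm -> mterm -> mterm
| MGc : mterm -> mterm -> mterm.

Fixpoint erase (T : mterm) : term :=
  match T with
  | MVar _ n => Var n
  | MLam t => Lam t
  | MApp _ X U => App (erase X) (erase U)
  | MES B U => ES (erase B) (erase U)
  | MGc B X => ES (lift 1 0 (erase B)) (erase X)
  end.

Fixpoint embed (t : term) : mterm :=
  match t with
  | Var n => MVar false n
  | Lam b => MLam b
  | App a b => MApp false (embed a) (embed b)
  | ES a b => MES (embed a) (embed b)
  end.

Fixpoint mlift (k c : nat) (T : mterm) : mterm :=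
  match T with
  | MVar m n => MVar m (if c <=? n then n + k else n)
  | MLam t => MLam (lift k (S c) t)
  | MApp m X U => MApp m (mlift k c X) (mlift k c U)
  | MES B U => MES (mlift k (S c) B) (mlift k c U)
  | MGc B X => MGc (mlift k c B) (mlift k c X)
  end.

Lemma erase_embed : forall t, erase (embed t) = t.
Proof. induction t; simpl; f_equal; auto. Qed.

Lemma erase_mlift : forall T k c, erase (mlift k c T) = lift k c (erase T).
Proof.
  induction T; intros; simpl; leb_cases; f_equal; auto.
  rewrite IHT1. apply lift_1_0_lift.
Qed.

Lemma mlift_anti : forall T k c t, erase T = lift k c t -> exists T0, T = mlift k c T0 /\ erase T0 = t.
Proof.
  induction T; intros k c tt H; simpl in H; symmetry in H.
  - apply lift_inv_Var in H as [m [? ?]]; subst. exists (MVar b m). simpl. split; auto.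
  - apply lift_inv_Lam in H as [b0 [? ?]]; subst. exists (MLam b0). simpl. split; auto.
  - apply lift_inv_App in H as [a0 [b0 [? [? ?]]]]; subst.
    destruct (IHT1 k c a0) as [X0 [? ?]]; auto. destruct (IHT2 k c b0) as [U0 [? ?]]; auto. subst.
    exists (MApp b X0 U0); simpl; split; auto.
  - apply lift_inv_ES in H as [a0 [b0 [? [? ?]]]]; subst.
    destruct (IHT1 k (S c) a0) as [X0 [? ?]]; auto. destruct (IHT2 k c b0) as [U0 [? ?]]; auto. subst.
    exists (MES X0 U0); simpl; split; auto.
  - apply lift_inv_ES in H as [a0 [b0 [? [? ?]]]]; subst.
    destruct (lift_lift_inv a0 (erase T1) k 0 c) as [y0 [? ?]]; auto. subst.
    destruct (IHT1 k c y0) as [X0 [? ?]]; auto. destruct (IHT2 k c b0) as [U0 [? ?]]; auto. subst.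
    exists (MGc X0 U0); simpl; split; auto.
Qed.

Fixpoint mmres (X U : mterm) : mterm :=
  match X with
  | MLam b => MES (embed b) U
  | MES X' W => MES (mmres X' (mlift 1 0 U)) W
  | MGc X0 W => MGc (mmres X0 U) W
  | _ => MApp false X U
  end.

Fixpoint mgres (B X : mterm) : mterm :=
  match X with
  | MLam _ => B
  | MES X' W => MES (mgres (mlift 1 0 B) X') W
  | MGc X0 W => MGc (mgres B X0) W
  | _ => MGc B X
  end.

Lemma erase_mmres : forall X U, erase (mmres X U) = mres (erase X) (erase U).
Proof.
  induction X; intros; simpl; auto.
  - rewrite erase_embed; auto.
  - rewrite IHX1. rewrite erase_mlift. auto.
  - rewrite IHX1. rewrite mres_lift. auto.
Qed.

Lemma erase_mgres : forall X B, erase (mgres B X) = gres (erase B) (erase X).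
Proof.
  induction X; intros; simpl; auto.
  - rewrite IHX1. rewrite erase_mlift. auto.
  - rewrite IHX1. rewrite gres_lift. auto.
Qed.

Inductive msub1 (b : bool) : nat -> mterm -> mterm -> mterm -> Prop :=
| ms_var : forall k U, msub1 b k U (MVar b k) (mlift (S k) 0 U)
| ms_appL : forall k U m X X' Y, msub1 b k U X X' -> msub1 b k U (MApp m X Y) (MApp m X' Y)
| ms_appR : forall k U m X Y Y', msub1 b k U Y Y' -> msub1 b k U (MApp m X Y) (MApp m X Y')
| ms_esL : forall k U X X' Y, msub1 b (S k) U X X' -> msub1 b k U (MES X Y) (MES X' Y)
| ms_esR : forall k U X Y Y', msub1 b k U Y Y' -> msub1 b k U (MES X Y) (MES X Y')
| ms_gcL : forall k U X X' Y, msub1 b k U X X' -> msub1 b k U (MGc X Y) (MGc X' Y)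
| ms_gcR : forall k U X Y Y', msub1 b k U Y Y' -> msub1 b k U (MGc X Y) (MGc X Y').

Lemma msub1_corr' : forall T k u B', sub1 k u (erase T) B' -> forall U, u = erase U ->
  exists b T1, msub1 b k U T T1 /\ erase T1 = B'.
Proof.
  induction T; intros k u B' H U Hu; simpl in H; inversion H; subst.
  - exists b. eexists. split. constructor. rewrite erase_mlift. auto.
  - destruct (IHT1 _ _ _ H5 U eq_refl) as [bb [T1' [? ?]]]. subst. exists bb, (MApp b T1' T2); split; auto. constructor; auto.
  - destruct (IHT2 _ _ _ H5 U eq_refl) as [bb [T1' [? ?]]]. subst. exists bb, (MApp b T1 T1'); split; auto. constructor; auto.
  - destruct (IHT1 _ _ _ H5 U eq_refl) as [bb [T1' [? ?]]]. subst. exists bb, (MES T1' T2); split; auto. constructor; auto.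
  - destruct (IHT2 _ _ _ H5 U eq_refl) as [bb [T1' [? ?]]]. subst. exists bb, (MES T1 T1'); split; auto. apply ms_esR; auto.
  - destruct (sub1_antilift2 _ _ _ _ H5 k 0 (erase T1)) as [t' [? ?]]; auto; try lia. subst.
    destruct (IHT1 _ _ _ H0 U eq_refl) as [bb [T1' [? ?]]]. subst. exists bb, (MGc T1' T2); split; auto. constructor; auto.
  - destruct (IHT2 _ _ _ H5 U eq_refl) as [bb [T1' [? ?]]]. subst. exists bb, (MGc T1 T1'); split; auto. apply ms_gcR; auto.
Qed.

Lemma sub1_lift_low : forall j u B B', sub1 j u B B' -> forall c, c <= j -> sub1 (S j) u (lift 1 c B) (lift 1 c B').
Proof.
  induction 1; intros cc Hc; cbn [lift].
  - leb_cases; [|lia]. rewrite lift_lift by lia. replace (S k) with (k + 1) at 1 by lia.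
    replace (1 + S k) with (S (k + 1)) by lia. constructor.
  - constructor; auto.
  - apply s1_appR; auto.
  - constructor. apply IHsub1; lia.
  - apply s1_esR; auto.
Qed.

Lemma msub1_erase : forall b k U T T1, msub1 b k U T T1 -> sub1 k (erase U) (erase T) (erase T1).
Proof.
  induction 1; simpl.
  - rewrite erase_mlift. constructor.
  - constructor; auto.
  - apply s1_appR; auto.
  - constructor; auto.
  - apply s1_esR; auto.
  - constructor. apply sub1_lift_low; auto; lia.
  - apply s1_esR; auto.
Qed.

Fixpoint valid (T : mterm) : Prop :=
  match T with
  | MVar _ _ => True
  | MLam _ => True
  | MApp m X U => (m = true -> isSL (erase X)) /\ valid X /\ valid U
  | MES B U => valid B /\ valid U
  | MGc B X => isSL (erase X) /\ valid B /\ valid X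
  end.

Lemma valid_embed : forall t, valid (embed t).
Proof. induction t; simpl; intuition discriminate. Qed.

Lemma valid_mlift : forall T k c, valid T -> valid (mlift k c T).
Proof.
  induction T; simpl; intros; intuition.
  - rewrite erase_mlift. apply isSL_lift; auto.
  - rewrite erase_mlift. apply isSL_lift; auto.
Qed.

Lemma valid_mlift_inv : forall T k c, valid (mlift k c T) -> valid T.
Proof.
  induction T; simpl; intros; intuition eauto;
  rewrite erase_mlift in *; eapply isSL_lift_inv; eauto.
Qed.

Lemma valid_msub1 : forall b k U T T1, msub1 b k U T T1 -> valid U -> valid T -> valid T1.
Proof.
  induction 1; simpl; intros; intuition auto using valid_mlift.
  apply msub1_erase in H. eapply sub1_isSL; eauto.
  apply msub1_erase in H. eapply sub1_isSL; eauto.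
Qed.

Lemma valid_mmres : forall X U, valid X -> valid U -> valid (mmres X U).
Proof.
  induction X; simpl; intros; intuition auto using valid_embed, valid_mlift; discriminate.
Qed.

Lemma valid_mgres : forall X B, isSL (erase X) -> valid B -> valid X -> valid (mgres B X).
Proof.
  induction X; simpl; intros; intuition auto using valid_mlift.
  apply IHX1; auto. eapply isSL_lift_inv; eauto.
Qed.

Definition env := nat -> option term.
Definition ext (s : env) (u : term) : env :=
  fun i => match i with 0 => Some (lift 1 0 u) | S j => option_map (lift 1 0) (s j) end.

Fixpoint dev (s : env) (T : mterm) : term :=
  match T with
  | MVar true n => match s n with Some t => t | None => Var n end
  | MVar false n => Var n
  | MLam t => Lam t
  | MApp false X U => App (dev s X) (dev s U)
  | MApp true X U => mres (dev s X) (dev s U)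
  | MES B U => ES (dev (ext s (dev s U)) B) (dev s U)
  | MGc B X => gres (dev s B) (dev s X)
  end.

Lemma ext_lift_hyp : forall (s s' : env) k c a,
  (forall i, s' (if i <? c then i else i + k) = option_map (lift k c) (s i)) ->
  forall i, ext s' (lift k c a) (if i <? S c then i else i + k) = option_map (lift k (S c)) (ext s a i).
Proof.
  intros s s' k c a H [|j].
  - simpl. f_equal. apply lift_1_0_lift.
  - replace (S j <? S c) with (j <? c) by reflexivity.
    specialize (H j). destruct (j <? c); simpl in *; rewrite H; destruct (s j); simpl; auto;
    f_equal; apply lift_1_0_lift.
Qed.

Lemma dev_mlift : forall T k c (s s' : env),
  (forall i, s' (if i <? c then i else i + k) = option_map (lift k c) (s i)) ->
  dev s' (mlift k c T) = lift k c (dev s T).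
Proof.
  induction T; intros k c s s' H; simpl.
  - destruct b.
    + specialize (H n). leb_cases; try lia; rewrite H; destruct (s n); simpl; auto; leb_cases; auto; lia.
    + leb_cases; simpl; leb_cases; auto; lia.
  - auto.
  - destruct b; rewrite IHT1 with (s := s), IHT2 with (s := s); auto. rewrite mres_lift; auto.
  - rewrite IHT2 with (s := s); auto. f_equal. apply IHT1. apply ext_lift_hyp; auto.
  - rewrite IHT1 with (s := s), IHT2 with (s := s); auto. rewrite gres_lift; auto.
Qed.

Lemma hyp_shift : forall (s s' : env) k, (forall i, s' (k + i) = option_map (lift k 0) (s i)) ->
  forall i, s' (if i <? 0 then i else i + k) = option_map (lift k 0) (s i).
Proof. intros. simpl. rewrite Nat.add_comm. auto. Qed.

Lemma dev_mlift1 : forall T (s : env) a, dev (ext s a) (mlift 1 0 T) = lift 1 0 (dev s T).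
Proof. intros. apply dev_mlift. apply hyp_shift. intros; reflexivity. Qed.

Lemma dev_embed : forall t s, dev s (embed t) = t.
Proof. induction t; intros; simpl; f_equal; auto. Qed.

Lemma isSL_dev : forall X s, isSL (erase X) -> isSL (dev s X).
Proof.
  induction X; intros; simpl in *; try contradiction; auto.
  apply isSL_gres. apply IHX1. eapply isSL_lift_inv; eauto.
Qed.

Lemma dev_mmres : forall X U s, isSL (erase X) -> dev s (mmres X U) = mres (dev s X) (dev s U).
Proof.
  induction X; intros U s H; simpl in *; try contradiction.
  - rewrite dev_embed. auto.
  - f_equal. rewrite IHX1 by auto. rewrite dev_mlift1. auto.
  - rewrite IHX1. rewrite mres_gres. auto. eapply isSL_lift_inv; eauto.
Qed.

Lemma dev_mgres : forall X B s, isSL (erase X) -> dev s (mgres B X) = gres (dev s B) (dev s X).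
Proof.
  induction X; intros B s H; simpl in *; try contradiction.
  - auto.
  - f_equal. rewrite IHX1 by auto. rewrite dev_mlift1. auto.
  - rewrite IHX1. rewrite gres_assoc. auto. eapply isSL_lift_inv; eauto.
Qed.

Lemma env_ext_hyp : forall (s s0 : env) k a, (forall i, s (S k + i) = option_map (lift (S k) 0) (s0 i)) ->
  forall i, ext s a (S (S k) + i) = option_map (lift (S (S k)) 0) (s0 i).
Proof.
  intros. simpl. specialize (H i). simpl in H. rewrite H. destruct (s0 i); simpl; auto. f_equal. rewrite lift_lift by lia. f_equal.
Qed.

Lemma dev_msub1_true : forall k U T T1, msub1 true k U T T1 -> forall (s s0 : env),
  s k = Some (lift (S k) 0 (dev s0 U)) ->
  (forall i, s (S k + i) = option_map (lift (S k) 0) (s0 i)) ->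
  dev s T1 = dev s T.
Proof.
  induction 1; intros s s0 Hk Hs; simpl.
  - rewrite Hk. apply dev_mlift. apply hyp_shift. auto.
  - destruct m; rewrite (IHmsub1 s s0); auto.
  - destruct m; rewrite (IHmsub1 s s0); auto.
  - f_equal. apply (IHmsub1 _ s0).
    + simpl. rewrite Hk. simpl. f_equal. rewrite lift_lift by lia. f_equal.
    + apply env_ext_hyp; auto.
  - rewrite (IHmsub1 s s0); auto.
  - rewrite (IHmsub1 s s0); auto.
  - rewrite (IHmsub1 s s0); auto.
Qed.

Definition wext (r : nat -> nat) (n : nat) : nat -> nat :=
  fun i => match i with 0 => n | S j => r j end.

Fixpoint w (r : nat -> nat) (T : mterm) : nat :=
  match T with
  | MVar true n => S (r n)
  | MVar false _ => 0
  | MLam _ => 0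
  | MApp m X U => (if m then 1 else 0) + w r X + w r U
  | MES B U => w (wext r (w r U)) B + w r U
  | MGc B X => 1 + w r B + w r X
  end.

Lemma w_mlift : forall T k c (r r' : nat -> nat),
  (forall i, r' (if i <? c then i else i + k) = r i) -> w r' (mlift k c T) = w r T.
Proof.
  induction T; intros k c r r' H; simpl.
  - destruct b; auto. specialize (H n). leb_cases; try lia; rewrite H; auto.
  - auto.
  - rewrite (IHT1 k c r r'), (IHT2 k c r r'); auto.
  - rewrite (IHT2 k c r r') by auto. f_equal. apply IHT1.
    intros [|j]; simpl; auto. replace (S j <? S c) with (j <? c) by reflexivity.
    specialize (H j). destruct (j <? c); auto.
  - rewrite (IHT1 k c r r'), (IHT2 k c r r'); auto.
Qed.

Lemma w_mlift1 : forall T r n, w (wext r n) (mlift 1 0 T) = w r T.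
Proof. intros. apply w_mlift. intros; simpl. rewrite Nat.add_1_r. reflexivity. Qed.

Lemma w_mono : forall T (r r' : nat -> nat), (forall i, r i <= r' i) -> w r T <= w r' T.
Proof.
  induction T; intros r r' H; simpl.
  - destruct b; auto. specialize (H n); lia.
  - auto.
  - specialize (IHT1 r r' H). specialize (IHT2 r r' H). lia.
  - assert (w r T2 <= w r' T2) by auto.
    assert (w (wext r (w r T2)) T1 <= w (wext r' (w r' T2)) T1).
    { apply IHT1. intros [|j]; simpl; auto. }
    lia.
  - specialize (IHT1 r r' H). specialize (IHT2 r r' H). lia.
Qed.

Lemma w_embed : forall t r, w r (embed t) = 0.
Proof. induction t; intros; simpl; auto. rewrite IHt1, IHt2; auto. rewrite IHt1, IHt2; auto. Qed.

Lemma w_mmres : forall X U r, isSL (erase X) -> w r (mmres X U) = w r X + w r U.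
Proof.
  induction X; intros U r H; simpl in *; try contradiction.
  - rewrite w_embed. auto.
  - rewrite IHX1 by auto. rewrite w_mlift1. lia.
  - rewrite IHX1. lia. eapply isSL_lift_inv; eauto.
Qed.

Lemma w_mgres : forall X B r, isSL (erase X) -> w r (mgres B X) = w r B + w r X.
Proof.
  induction X; intros B r H; simpl in *; try contradiction.
  - lia.
  - rewrite IHX1 by auto. rewrite w_mlift1. lia.
  - rewrite IHX1. lia. eapply isSL_lift_inv; eauto.
Qed.

Lemma w_msub1_true : forall k U T T1, msub1 true k U T T1 -> forall (r r0 : nat -> nat),
  r k = w r0 U -> (forall i, r (S k + i) = r0 i) -> w r T1 < w r T.
Proof.
  induction 1; intros r r0 Hk Hs; simpl.
  - rewrite (w_mlift U (S k) 0 r0 r). lia. intros; simpl. rewrite Nat.add_comm. auto.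
  - specialize (IHmsub1 r r0 Hk Hs). destruct m; lia.
  - specialize (IHmsub1 r r0 Hk Hs). destruct m; lia.
  - assert (w (wext r (w r Y)) X' < w (wext r (w r Y)) X).
    { apply (IHmsub1 _ r0); simpl; auto. }
    lia.
  - specialize (IHmsub1 r r0 Hk Hs).
    assert (w (wext r (w r Y')) X <= w (wext r (w r Y)) X).
    { apply w_mono. intros [|j]; simpl; lia. }
    lia.
  - specialize (IHmsub1 r r0 Hk Hs). lia.
  - specialize (IHmsub1 r r0 Hk Hs). lia.
Qed.

Definition optR (R : term -> term -> Prop) (o o' : option term) : Prop :=
  match o, o' with Some a, Some b => R a b | None, None => True | _, _ => False end.

Lemma dev_env_star : forall T (s s' : env), valid T -> (forall i, optR star (s i) (s' i)) ->
  star (dev s T) (dev s' T).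
Proof.
  induction T; intros s s' HV H; simpl in *.
  - destruct b; [|constructor]. specialize (H n). destruct (s n), (s' n); simpl in H; try contradiction; auto; constructor.
  - constructor.
  - destruct HV as [Hm [HX HU]]. destruct b.
    + apply star_trans with (mres (dev s' T1) (dev s T2)).
      * apply mres_star; auto. apply isSL_dev; auto.
      * apply mres_star_arg; auto. apply isSL_dev; auto.
    + apply star_trans with (App (dev s' T1) (dev s T2)); [apply star_appL|apply star_appR]; auto.
  - destruct HV as [HB HU].
    assert (star (dev s T2) (dev s' T2)) by auto.
    apply star_trans with (ES (dev (ext s' (dev s' T2)) T1) (dev s T2)); [apply star_esL|apply star_esR]; auto.
    apply IHT1; auto. intros [|j]; simpl. apply star_lift; auto.
    specialize (H j). destruct (s j), (s' j); simpl in *; auto. apply star_lift; auto.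
  - destruct HV as [HX [HB HU]].
    apply star_trans with (gres (dev s' T1) (dev s T2)).
    + apply gres_star1; auto.
    + apply gres_star2; auto. apply isSL_dev; auto.
Qed.

Lemma dev_env_subm : forall T k z (s s' : env), valid T ->
  (forall i, optR (fun a b => exists c, subm k z c a b) (s i) (s' i)) ->
  exists c, subm k z c (dev s T) (dev s' T).
Proof.
  induction T; intros k z s s' HV H; simpl in *.
  - destruct b; [|exists 0; constructor]. specialize (H n). destruct (s n), (s' n); simpl in H; try contradiction; auto.
    exists 0; constructor.
  - exists 0; constructor.
  - destruct HV as [Hm [HX HU]].
    destruct (IHT1 k z s s' HX H) as [c1 ?]. destruct (IHT2 k z s s' HU H) as [c2 ?].
    destruct b.
    + exists (c1 + c2). apply subm_mres; auto. apply isSL_dev; auto.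
    + exists (c1 + c2). constructor; auto.
  - destruct HV as [HB HU].
    destruct (IHT2 k z s s' HU H) as [c2 ?].
    destruct (IHT1 (S k) z (ext s (dev s T2)) (ext s' (dev s' T2)) HB) as [c1 ?].
    { intros [|j]; simpl. exists c2. apply subm_lift1; auto.
      specialize (H j). destruct (s j), (s' j); simpl in *; auto. destruct H as [c ?]. exists c. apply subm_lift1; auto. }
    exists (c1 + c2). constructor; auto.
  - destruct HV as [HX [HB HU]].
    destruct (IHT1 k z s s' HB H) as [c1 ?]. destruct (IHT2 k z s s' HU H) as [c2 ?].
    exists (c1 + c2). apply subm_gres; auto. apply isSL_dev; auto.
Qed.

Lemma dev_msub1_false : forall k U T T1, msub1 false k U T T1 -> valid T -> forall (s s0 : env),
  (forall i, s (S k + i) = option_map (lift (S k) 0) (s0 i)) ->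
  exists c, 0 < c /\ subm k (dev s0 U) c (dev s T) (dev s T1).
Proof.
  induction 1; intros HV s s0 Hs; simpl in *.
  - exists 1. split; auto. rewrite (dev_mlift U (S k) 0 s0 s). constructor. apply hyp_shift; auto.
  - destruct HV as [Hm [HX HY]]. destruct (IHmsub1 HX s s0 Hs) as [c [? ?]]. exists c. split; auto.
    destruct m.
    + apply (subm_eqn _ _ (c + 0)); [|lia]. apply subm_mres; auto using subm_refl. apply isSL_dev; auto.
    + apply (subm_eqn _ _ (c + 0)); [|lia]. constructor; auto using subm_refl.
  - destruct HV as [Hm [HX HY]]. destruct (IHmsub1 HY s s0 Hs) as [c [? ?]]. exists c. split; auto.
    destruct m.
    + apply (subm_eqn _ _ (0 + c)); [|lia]. apply subm_mres; auto using subm_refl. apply isSL_dev; auto.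
    + apply (subm_eqn _ _ (0 + c)); [|lia]. constructor; auto using subm_refl.
  - destruct HV as [HX HY]. destruct (IHmsub1 HX (ext s (dev s Y)) s0) as [c [? ?]].
    { apply env_ext_hyp; auto. }
    exists c. split; auto. apply (subm_eqn _ _ (c + 0)); [|lia]. constructor; auto using subm_refl.
  - destruct HV as [HX HY]. destruct (IHmsub1 HY s s0 Hs) as [c [? ?]].
    destruct (dev_env_subm X (S k) (dev s0 U) (ext s (dev s Y)) (ext s (dev s Y')) HX) as [c1 ?].
    { intros [|j]; simpl. exists c. apply subm_lift1; auto.
      destruct (s j); simpl; auto. exists 0. apply subm_refl. }
    exists (c1 + c). split; [lia|]. constructor; auto.
  - destruct HV as [HY [HX HB]]. destruct (IHmsub1 HX s s0 Hs) as [c [? ?]]. exists c. split; auto.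
    apply (subm_eqn _ _ (c + 0)); [|lia]. apply subm_gres; auto using subm_refl. apply isSL_dev; auto.
  - destruct HV as [HY [HX HB]]. destruct (IHmsub1 HB s s0 Hs) as [c [? ?]]. exists c. split; auto.
    apply (subm_eqn _ _ (0 + c)); [|lia]. apply subm_gres; auto using subm_refl. apply isSL_dev; auto.
Qed.

Lemma istep_App_inv : forall a b t1, istep (App a b) t1 ->
  (isSL a /\ t1 = mres a b) \/ (exists a', istep a a' /\ t1 = App a' b) \/ (exists b', istep b b' /\ t1 = App a b').
Proof. intros a b t1 H; inversion H; subst; eauto 6. Qed.

Lemma istep_ES_inv : forall a b t1, istep (ES a b) t1 ->
  (exists t0, a = lift 1 0 t0 /\ isSL b /\ t1 = gres t0 b) \/ (exists a', sub1 0 b a a' /\ t1 = ES a' b) \/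
  (exists a', istep a a' /\ t1 = ES a' b) \/ (exists b', istep b b' /\ t1 = ES a b').
Proof. intros a b t1 H; inversion H; subst; eauto 8. Qed.

Lemma key : forall T, valid T -> forall t1, istep (erase T) t1 ->
  exists T1, erase T1 = t1 /\ valid T1 /\
   (((forall s, dev s T1 = dev s T) /\ (forall r, w r T1 < w r T))
    \/ (forall s, tplus (dev s T) (dev s T1))).
Proof.
  induction T; intros HV t1 H; simpl in H.
  - exfalso; eapply istep_Var; eauto.
  - exfalso; eapply istep_Lam; eauto.
  -
    destruct HV as [Hm [HX HU]].
    apply istep_App_inv in H as [[HS ?] | [[a' [Ha ?]] | [b' [Hb ?]]]]; subst.
    + exists (mmres T1 T2). split; [apply erase_mmres|]. split; [apply valid_mmres; auto|].
      destruct b.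
      * left. split; intros; simpl. apply dev_mmres; auto. rewrite w_mmres; auto.
      * right. intros s; simpl. rewrite dev_mmres by auto. apply step_plus. constructor. apply isSL_dev; auto.
    + destruct (IHT1 HX a' Ha) as [X1 [? [HV1 Hd]]]; subst.
      exists (MApp b X1 T2). split; [simpl; auto|]. split.
      { simpl. split; auto. intros Hb. apply isSL_step with (erase T1); auto. }
      destruct Hd as [[Hd Hw] | Hd].
      * left. split; intros; simpl; [rewrite Hd; auto|]. specialize (Hw r). destruct b; lia.
      * right. intros s; simpl. destruct b.
        -- apply mres_plus; auto. apply isSL_dev; auto.
        -- apply plus_appL; auto.
    + destruct (IHT2 HU b' Hb) as [U1 [? [HV1 Hd]]]; subst.
      exists (MApp b T1 U1). split; [simpl; auto|]. split; [simpl; auto|].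
      destruct Hd as [[Hd Hw] | Hd].
      * left. split; intros; simpl; [rewrite Hd; auto|]. specialize (Hw r). destruct b; lia.
      * right. intros s; simpl. destruct b.
        -- apply mres_plus_arg; auto. apply isSL_dev; auto.
        -- apply plus_appR; auto.
  -
    destruct HV as [HB HU].
    apply istep_ES_inv in H as [[t0 [Ht0 [HS ?]]] | [[a' [Hs ?]] | [[a' [Ha ?]] | [b' [Hb ?]]]]]; subst.
    + destruct (mlift_anti T1 1 0 t0 Ht0) as [B0 [? ?]]; subst.
      exists (mgres B0 T2). split; [apply erase_mgres|]. split.
      { apply valid_mgres; auto. eapply valid_mlift_inv; eauto. }
      right. intros s. simpl. rewrite dev_mlift1. rewrite dev_mgres by auto.
      apply step_plus. constructor. apply isSL_dev; auto.
    + destruct (msub1_corr' T1 0 (erase T2) a' Hs T2 eq_refl) as [bb [B1 [Hms ?]]]; subst.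
      exists (MES B1 T2). split; [simpl; auto|]. split; [simpl; split; auto; eapply valid_msub1; eauto|].
      destruct bb.
      * left. split; intros; simpl.
        -- f_equal. apply (dev_msub1_true 0 T2 T1 B1 Hms _ s); simpl; auto.
        -- assert (w (wext r (w r T2)) B1 < w (wext r (w r T2)) T1).
           { apply (w_msub1_true 0 T2 T1 B1 Hms _ r); simpl; auto. }
           lia.
      * right. intros s. simpl.
        destruct (dev_msub1_false 0 T2 T1 B1 Hms HB (ext s (dev s T2)) s) as [c [Hc Hsm]].
        { intros i; simpl; auto. }
        apply (subm_seq c _ _ _ Hsm Hc).
    + destruct (IHT1 HB a' Ha) as [B1 [? [HV1 Hd]]]; subst.
      exists (MES B1 T2). split; [simpl; auto|]. split; [simpl; auto|].
      destruct Hd as [[Hd Hw] | Hd].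
      * left. split; intros; simpl; [rewrite Hd; auto|]. specialize (Hw (wext r (w r T2))). lia.
      * right. intros s; simpl. apply plus_esL; auto.
    + destruct (IHT2 HU b' Hb) as [U1 [? [HV1 Hd]]]; subst.
      exists (MES T1 U1). split; [simpl; auto|]. split; [simpl; auto|].
      destruct Hd as [[Hd Hw] | Hd].
      * left. split; intros; simpl; [rewrite Hd; auto|]. specialize (Hw r).
        assert (w (wext r (w r U1)) T1 <= w (wext r (w r T2)) T1).
        { apply w_mono. intros [|j]; simpl; lia. }
        lia.
      * right. intros s; simpl.
        apply star_plus_trans with (ES (dev (ext s (dev s U1)) T1) (dev s T2)).
        -- apply star_esL. apply dev_env_star; auto. intros [|j]; simpl.
           ++ apply star_lift. apply plus_star; auto.
           ++ destruct (s j); simpl; auto. constructor.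
        -- apply plus_esR; auto.
  -
    destruct HV as [HS [HB HX]].
    apply istep_ES_inv in H as [[t0 [Ht0 [HS' ?]]] | [[a' [Hs ?]] | [[a' [Ha ?]] | [b' [Hb ?]]]]]; subst.
    + apply lift_inj in Ht0. subst.
      exists (mgres T1 T2). split; [apply erase_mgres|]. split; [apply valid_mgres; auto|].
      left. split; intros; simpl. apply dev_mgres; auto. rewrite w_mgres; auto.
    + exfalso. eapply (sub1_lift_none 0); eauto.
    + destruct (istep_antilift _ _ Ha 1 0 (erase T1) eq_refl) as [t0' [? Ht]]; subst.
      destruct (IHT1 HB t0' Ht) as [B1 [? [HV1 Hd]]]; subst.
      exists (MGc B1 T2). split; [simpl; auto|]. split; [simpl; auto|].
      destruct Hd as [[Hd Hw] | Hd].
      * left. split; intros; simpl; [rewrite Hd; auto|]. specialize (Hw r). lia.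
      * right. intros s; simpl. apply gres_plus1; auto.
    + destruct (IHT2 HX b' Hb) as [X1 [? [HV1 Hd]]]; subst.
      exists (MGc T1 X1). split; [simpl; auto|]. split.
      { simpl. split; auto. apply isSL_step with (erase T2); auto. }
      destruct Hd as [[Hd Hw] | Hd].
      * left. split; intros; simpl; [rewrite Hd; auto|]. specialize (Hw r). lia.
      * right. intros s; simpl. apply gres_plus2; auto. apply isSL_dev; auto.
Qed.

Lemma mark_sub1 : forall k u B B', sub1 k u B B' ->
  exists M, erase M = B /\ valid M /\ forall s : env, s k = Some (lift (S k) 0 u) -> dev s M = B'.
Proof.
  induction 1.
  - exists (MVar true k). simpl. split; auto. split; auto. intros s H; rewrite H; auto.
  - destruct IHsub1 as [M [? [? HM]]]. exists (MApp false M (embed b)). simpl.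
    rewrite erase_embed. split; [congruence|]. split; [split; [discriminate|split; auto using valid_embed]|].
    intros. rewrite HM, dev_embed; auto.
  - destruct IHsub1 as [M [? [? HM]]]. exists (MApp false (embed a) M). simpl.
    rewrite erase_embed. split; [congruence|]. split; [split; [discriminate|split; auto using valid_embed]|].
    intros. rewrite HM, dev_embed; auto.
  - destruct IHsub1 as [M [? [? HM]]]. exists (MES M (embed b)). simpl.
    rewrite erase_embed. split; [congruence|]. split; [split; auto using valid_embed|].
    intros s Hs. rewrite dev_embed. f_equal. apply HM. simpl. rewrite Hs. simpl. f_equal.
    rewrite lift_lift by lia. f_equal.
  - destruct IHsub1 as [M [? [? HM]]]. exists (MES (embed a) M). simpl.
    rewrite erase_embed. split; [congruence|]. split; [split; auto using valid_embed|].
    intros s Hs. rewrite HM by auto. rewrite dev_embed. auto.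
Qed.

Lemma mark_step : forall t t', istep t t' ->
  exists T, erase T = t /\ valid T /\ forall s, dev s T = t'.
Proof.
  induction 1.
  - exists (MApp true (embed X) (embed u)). simpl. rewrite !erase_embed. split; auto.
    split. split; [intros; auto | split; apply valid_embed]. intros; rewrite !dev_embed; auto.
  - exists (MGc (embed t0) (embed X)). simpl. rewrite !erase_embed. split; auto.
    split. split; [auto | split; apply valid_embed]. intros; rewrite !dev_embed; auto.
  - destruct (mark_sub1 _ _ _ _ H) as [M [? [? HM]]].
    exists (MES M (embed u)). simpl. rewrite erase_embed. split; [congruence|].
    split. split; auto using valid_embed. intros s. rewrite dev_embed. rewrite HM; auto.
  - destruct IHistep as [M [? [? HM]]]. exists (MApp false M (embed b)). simpl. rewrite erase_embed.
    split; [congruence|]. split. split; [discriminate| split; auto using valid_embed].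
    intros; rewrite HM, dev_embed; auto.
  - destruct IHistep as [M [? [? HM]]]. exists (MApp false (embed a) M). simpl. rewrite erase_embed.
    split; [congruence|]. split. split; [discriminate| split; auto using valid_embed].
    intros; rewrite HM, dev_embed; auto.
  - destruct IHistep as [M [? [? HM]]]. exists (MES M (embed b)). simpl. rewrite erase_embed.
    split; [congruence|]. split. split; auto using valid_embed.
    intros; rewrite HM, dev_embed; auto.
  - destruct IHistep as [M [? [? HM]]]. exists (MES (embed a) M). simpl. rewrite erase_embed.
    split; [congruence|]. split. split; auto using valid_embed.
    intros; rewrite HM, dev_embed; auto.
Qed.

Definition SNi (t : term) : Prop := Acc (fun a b => istep b a) t.

Lemma SNi_plus : forall x, SNi x -> Acc (fun a b => tplus b a) x.
Proof.
  intros x H. induction H as [x Hx IH].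
  constructor. intros y [x1 [H1 H2]].
  specialize (IH x1 H1). clear H1 Hx.
  induction H2; auto.
  apply IHclos_refl_trans_1n. destruct IH as [IH]. apply IH. apply step_plus; auto.
Qed.

Lemma conservation : forall t', Acc (fun a b => tplus b a) t' ->
  forall T, valid T -> dev (fun _ => None) T = t' -> SNi (erase T).
Proof.
  intros t' Hacc. induction Hacc as [t' _ IHo].
  intros T. remember (w (fun _ => 0) T) as n eqn:Hn.
  revert T Hn. induction n as [n IHn] using (well_founded_induction lt_wf).
  intros T Hn HV Hd. constructor. intros t1 Hst.
  destruct (key T HV t1 Hst) as [T1 [? [HV1 [[Hd1 Hw] | Hp]]]]; subst.
  - apply (IHn (w (fun _ => 0) T1)); auto; try (rewrite Hd1; auto).
  - apply (IHo (dev (fun _ => None) T1)); auto.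
Qed.

Lemma SNi_expand : forall t t', istep t t' -> SNi t' -> SNi t.
Proof.
  intros t t' H Hs. destruct (mark_step t t' H) as [T [? [HV Hd]]]; subst.
  apply (conservation t'); auto. apply SNi_plus; auto.
Qed.

Lemma SN_iff : forall t, strongly_normalizing t <-> SNi t.
Proof.
  intros t; split; intros H; induction H as [x _ IH]; constructor; intros y Hy.
  - apply IH. apply istep_wstep; auto.
  - apply IH. apply wstep_istep; auto.
Qed.

Theorem corollary6p6 : forall t : term, weakly_normalizing t <-> strongly_normalizing t.
Proof.
  intros t; split.
  - intros [t' [Hr Hn]]. apply SN_iff.
    apply clos_rt_rt1n in Hr. induction Hr.
    + constructor. intros y Hy. exfalso. apply Hn. exists y. apply istep_wstep; auto.
    + apply SNi_expand with y; auto. apply wstep_istep; auto.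
  - intros H. induction H as [x _ IH].
    destruct (Classical_Prop.classic (exists t', wstep x t')) as [[t' Ht'] | Hn].
    + destruct (IH t' Ht') as [n [Hr Hnf]]. exists n. split; auto.
      apply rt_trans with t'; auto. apply rt_step; auto.
    + exists x. split; [apply rt_refl|]. exact Hn.
Qed.
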